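(* Let $(a_n)_{n\ge1}$ be an increasing sequence of natural numbers with $a_n\mid a_{n+1}$ and $\rho:=\sum_{n\ge1}1/a_n\le 1/4$. Define subsets $A_n\subset\mathbb N_0$, $n\in\mathbb N_0$, inductively: $A_0=\{ka_1:k\in\mathbb N_0\}$; for $n>0$, if $n\in A_m$ for some $m<n$ put $A_n=A_m$, and otherwise put $A_n=\{n+ka_{n+1}:k\in\mathbb N_0\}$. Define $z(n)=\boldsymbol\mu(\min A_n)$ for $n\in\mathbb N_0$, with the convention $\boldsymbol\mu(0):=0$. Then $$\liminf_{N\to\infty}\frac1N\sum_{k=1}^N z(k)\boldsymbol\mu(k)\ \ge\ \frac{6}{\pi^2}-2\rho>0.$$
   Context: $\boldsymbol\mu$ is the Möbius function: $\boldsymbol\mu(1)=1$, $\boldsymbol\mu(n)=0$ if $n$ is not square-free, $\boldsymbol\mu(p_1\cdots p_k)=(-1)^k$ for distinct primes $p_1,\dots,p_k$; here additionally $\boldsymbol\mu(0):=0$. $\mathbb N_0=\{0,1,2,\dots\}$. *)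

(* Defs.v *)
From HB Require Import structures.
From mathcomp Require Import all_boot all_order all_algebra.
From mathcomp Require Import all_classical all_reals all_analysis.
Set Implicit Arguments. Unset Strict Implicit. Unset Printing Implicit Defensive.
Import Order.TTheory GRing.Theory Num.Theory.

Definition squarefree (n : nat) : bool := all (fun p => logn p n == 1%N) (primes n).
Definition moebius (n : nat) : int :=
  if n == 0%N then 0%R
  else if squarefree n then ((-1) ^+ size (primes n))%R else 0%R.

(* An arithmetic progression {r + k d : k in N_0} is represented by (r, d). *)
Definition inAP (n : nat) (p : nat * nat) : bool :=
  (p.1 <= n) && (p.2 %| (n - p.1)).

(* Given the list l = [A_0; ...; A_{n-1}], compute A_n.
   If n ∈ A_m for some m < n, A_n := A_m (the least such m; the sets turn out
   to be pairwise disjoint or equal, so the choice is immaterial);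
   otherwise A_n := {n + k a_{n+1}}. *)
Definition nextA (a : nat -> nat) (l : seq (nat * nat)) (n : nat) : nat * nat :=
  if n == 0%N then (0%N, a 1%N)
  else match [seq p <- l | inAP n p] with
       | p :: _ => p
       | [::] => (n, a n.+1)
       end.

Fixpoint Alist (a : nat -> nat) (n : nat) : seq (nat * nat) :=
  match n with
  | 0 => [::]
  | n'.+1 => let l := Alist a n' in rcons l (nextA a l n')
  end.

Definition Aset (a : nat -> nat) (n : nat) : nat * nat := nth (0%N, 0%N) (Alist a n.+1) n.

Definition zfun (a : nat -> nat) (n : nat) : int := moebius (Aset a n).1.

(* Main.v *)
Require Import Defs.
From HB Require Import structures.
From mathcomp Require Import all_boot all_order all_algebra.
From mathcomp Require Import all_classical all_reals all_analysis.
From mathcomp Require Import ring lra zify.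
Import Order.TTheory GRing.Theory Num.Theory numFieldNormedType.Exports.
Local Open Scope classical_set_scope.
Local Open Scope ring_scope.

Section D.
Variable R : realType.

Lemma sin_le_id (x : R) : 0 <= x -> sin x <= x.
Proof.
rewrite le_eqVlt => /predU1P[<-|x0]; first by rewrite sin0.
have [c _ h] := @MVT R sin cos 0 x x0 (fun y _ => is_derive_sin y)
   (continuous_subspaceT (@continuous_sin R)).
move: h; rewrite sin0 !subr0 => ->.
by rewrite ler_piMl ?cos_le1 ?ltW.
Qed.

Lemma xcos_lt_sin (x : R) : 0 < x < pi -> x * cos x < sin x.
Proof.
move=> /andP[x0 xpi].
pose g := fun y : R => sin y - y * cos y.
have hd : forall y : R, is_derive y (1:R) g (y * sin y).
  move=> y; rewrite /g; apply: trigger_derive.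
  by rewrite /GRing.scale /=; ring.
have hc : {within `[0, x], continuous g}.
  apply: continuous_subspaceT => y.
  apply/differentiable_continuous/derivable1_diffP.
  by have := hd y; case.
have [c + h] := @MVT R g (fun y => y * sin y) 0 x x0 (fun y _ => hd y) hc.
rewrite in_itv /= => /andP[c0 cx]; move: h; rewrite /g sin0 cos0 mul0r !subr0 => h.
rewrite -subr_gt0 h; apply: mulr_gt0 => //; apply: mulr_gt0 => //.
by apply: sin_gt0_pi; rewrite c0 /= (lt_trans cx xpi).
Qed.

End D.


Section D2.
Variable R : realType.

Lemma pi_sq_lt12 : (pi : R) ^+ 2 < 12.
Proof.
set y : R := pi / 6.
have pi0 : (0 : R) < pi := pi_gt0 R.
have y0 : 0 < y by rewrite /y divr_gt0.
have ypi : y < pi by rewrite /y ltr_pdivrMr //; lra.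
have s0 : 0 < sin y by apply: sin_gt0_pi; rewrite y0 ypi.
have c0 : 0 < cos y.
  apply: cos_gt0_pihalf; apply/andP; split; rewrite /y; lra.
have e3 : sin (y + y + y) = 1.
  by rewrite (_ : y + y + y = pi / 2) ?sin_pihalf // /y; field.
have sc := cos2Dsin2 y.
move: e3; rewrite !sinD !cosD => e3.
set s := sin y in s0 e3 sc *; set c := cos y in c0 e3 sc *.
have e4 : (s + 1) * (2 * s - 1) ^+ 2 = 0.
  have -> : (s + 1) * (2 * s - 1) ^+ 2 =
    (1 - ((s * c + c * s) * c + (c * c - s * s) * s)) + 3 * s * (c ^+ 2 + s ^+ 2 - 1)
    by ring.
  by rewrite e3 sc; ring.
have s12 : s = 1 / 2.
  move: e4 => /eqP; rewrite mulf_eq0 sqrf_eq0 => /orP[/eqP|/eqP]; lra.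
have c2 : c ^+ 2 = 3 / 4 by rewrite s12 in sc; lra.
have h : y * c < s by apply: xcos_lt_sin; rewrite y0 ypi.
rewrite s12 /y in h.
have h2 : pi * c < 3 by lra.
have h3 : (pi * c) ^+ 2 < 9.
  have pc0 : 0 < pi * c by apply: mulr_gt0.
  rewrite expr2; nra.
rewrite exprMn c2 in h3; lra.
Qed.
End D2.


Section D3.
Variable R : realType.

Definition ang (n k : nat) : R := (k.*2.+1)%:R * pi / 2 ^+ n.+1.
Definition fcs (n k : nat) : R := (sin (ang n k) ^+ 2)^-1.

Lemma inv_sin2_split (x : R) : sin x != 0 ->
  (sin x ^+ 2)^-1 = (sin (x / 2) ^+ 2)^-1 / 4 + (sin (x / 2 + pi / 2) ^+ 2)^-1 / 4.
Proof.
rewrite sinDpihalf.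
have hx : x = (x / 2) *+ 2 by rewrite -mulr_natr mulfVK.
rewrite {1}hx {2}hx sin_mulr2n.
set s := sin (x / 2); set c := cos (x / 2).
have sc : c ^+ 2 + s ^+ 2 = 1 by apply: cos2Dsin2.
move=> h; have : (c * s) != 0 by apply: contraNneq h => ->; rewrite mul0rn.
rewrite mulf_eq0 negb_or => /andP[c0 s0].
rewrite -mulr_natr.
have -> : (s ^+ 2)^-1 / 4 + (c ^+ 2)^-1 / 4 = (c ^+ 2 + s ^+ 2) / ((c * s * 2) ^+ 2)
  by field; rewrite c0 s0.
by rewrite sc div1r.
Qed.


Lemma ang_pos n k : (k < 2 ^ n)%N -> 0 < ang n k < pi.
Proof.
move=> hk; have pi0 : (0 : R) < pi := pi_gt0 R.
have h2 : (0 : R) < 2 ^+ n.+1 by apply: exprn_gt0.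
rewrite /ang; apply/andP; split.
  by apply: divr_gt0 => //; apply: mulr_gt0.
rewrite ltr_pdivrMr // mulrC ltr_pM2l //.
have hk' : (k.*2.+1 < 2 ^ n.+1)%N by rewrite expnS mul2n -doubleS leq_double.
by rewrite -natrX ltr_nat.
Qed.

Lemma ang_half n k : ang n.+1 k = ang n k / 2.
Proof. by rewrite /ang exprSr; field; rewrite expf_neq0. Qed.

Lemma ang_shift n k : ang n.+1 (k + 2 ^ n) = ang n k / 2 + pi / 2.
Proof.
rewrite /ang doubleD -addSn natrD -[(2 ^ n).*2]mul2n natrM natrX !exprS.
by field; rewrite expf_neq0.
Qed.

Lemma hof n : \sum_(0 <= k < 2 ^ n) fcs n k = 4 ^+ n.
Proof.
elim: n => [|n IH].
  rewrite expn0 big_nat1 /fcs /ang mul1r expr1 sin_pihalf.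
  by rewrite expr1n invr1 expr0.
rewrite expnS mul2n -addnn (@big_cat_nat _ _ _ (2 ^ n)) ?leq_addr //=.
have -> : \sum_((2 ^ n)%N <= k < (2 ^ n + 2 ^ n)%N) fcs n.+1 k =
    \sum_(0 <= k < (2 ^ n)%N) fcs n.+1 (k + 2 ^ n)%N.
  by rewrite -{1}(add0n (2 ^ n)%N) big_addn addnK.
rewrite -big_split /= exprS -IH mulr_sumr.
apply: eq_big_nat => k /andP[_ hk].
rewrite /fcs ang_half ang_shift (inv_sin2_split (ang n k)).
  by rewrite mulrDr ![4 * _]mulrC !divfK // pnatr_eq0.
by rewrite gt_eqF //; apply: sin_gt0_pi; apply: ang_pos.
Qed.


Lemma inv_sq_le (a b : R) : 0 < a -> a <= b -> (b ^+ 2)^-1 <= (a ^+ 2)^-1.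
Proof.
move=> a0 ab; have b0 : 0 < b by apply: lt_le_trans ab.
rewrite lef_pV2 ?posrE ?exprn_gt0 //.
rewrite !expr2; nra.
Qed.

Lemma fcs_ge n k : (k < 2 ^ n)%N ->
  ((ang n k) ^+ 2)^-1 <= fcs n k /\ ((pi - ang n k) ^+ 2)^-1 <= fcs n k.
Proof.
move=> hk; have /andP[a0 api] := ang_pos n k hk.
have s0 : 0 < sin (ang n k) by apply: sin_gt0_pi; rewrite a0 api.
split; apply: inv_sq_le => //.
  by apply: sin_le_id; apply: ltW.
have -> : sin (ang n k) = sin (pi - ang n k).
  by rewrite sinD sinN cospi sinpi cosN; ring.
by apply: sin_le_id; rewrite subr_ge0 ltW.
Qed.

Lemma ang_refl (n k j : nat) : (k + j).+1 = (2 ^ n)%N ->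
  pi - ang n.+1 (k + 2 ^ n)%N = ang n.+1 j.
Proof.
move=> e.
have e2 : ((k + 2 ^ n).*2.+1 + j.*2.+1 = 2 ^ n.+2)%N.
  by rewrite !expnS -e; lia.
have E : ((j.*2.+1)%:R : R) = 2 ^+ n.+2 - ((k + 2 ^ n).*2.+1)%:R.
  by rewrite -natrX -e2 natrD addrC addKr.
rewrite /ang E; field.
by rewrite expf_neq0.
Qed.

Lemma g_eq n k : ((ang n k) ^+ 2)^-1 =
   (4 ^+ n.+1 / pi ^+ 2) * (((k.*2.+1)%:R : R) ^+ 2)^-1.
Proof.
have pi0 : (pi : R) != 0 by rewrite gt_eqF // pi_gt0.
have k0 : ((k.*2.+1)%:R : R) != 0 by rewrite pnatr_eq0.
have -> : (4 : R) ^+ n.+1 = (2 ^+ n.+1) ^+ 2.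
  by rewrite -exprM mulnC exprM; congr (_ ^+ _); rewrite expr2 -natrM.
rewrite /ang; move: pi0 k0; move: (pi : R) ((k.*2.+1)%:R : R) => p m p0 m0.
by field; rewrite p0 m0 expf_neq0.
Qed.

Lemma odd_bound n : \sum_(0 <= k < 2 ^ n) (((k.*2.+1)%:R : R) ^+ 2)^-1 <= pi ^+ 2 / 8.
Proof.
have H := hof n.+1.
rewrite expnS mul2n -addnn (@big_cat_nat _ _ _ (2 ^ n)) ?leq_addr //= in H.
have E2 : \sum_((2 ^ n)%N <= k < (2 ^ n + 2 ^ n)%N) fcs n.+1 k =
    \sum_(0 <= k < (2 ^ n)%N) fcs n.+1 (k + 2 ^ n)%N.
  by rewrite -{1}(add0n (2 ^ n)%N) big_addn addnK.
rewrite E2 in H.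
set g := fun k => ((ang n.+1 k) ^+ 2)^-1.
have h1 : \sum_(0 <= k < 2 ^ n) g k <= \sum_(0 <= k < 2 ^ n) fcs n.+1 k.
  apply: ler_sum_nat => k /andP[_ hk].
  by apply: (fcs_ge n.+1 k _).1; rewrite expnS mul2n -addnn ltn_addr.
have h2 : \sum_(0 <= k < 2 ^ n) g k <= \sum_(0 <= k < 2 ^ n) fcs n.+1 (k + 2 ^ n)%N.
  rewrite big_nat_rev /=; apply: ler_sum_nat => k /andP[_ hk].
  rewrite /g add0n -(ang_refl n k); last by lia.
  by apply: (fcs_ge n.+1 _ _).2; rewrite expnS mul2n -addnn ltn_add2r.
set O := \sum_(0 <= k < 2 ^ n) (((k.*2.+1)%:R : R) ^+ 2)^-1.
have h3 : \sum_(0 <= k < 2 ^ n) g k = (4 ^+ n.+2 / pi ^+ 2) * O.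
  by rewrite mulr_sumr; apply: eq_bigr => k _; rewrite /g g_eq.
have pi0 : (0 : R) < pi ^+ 2 by rewrite exprn_gt0 // pi_gt0.
have X0 : (0 : R) < 4 ^+ n.+1 by rewrite exprn_gt0.
have : (4 ^+ n.+2 / pi ^+ 2) * O *+ 2 <= 4 ^+ n.+1.
  by rewrite -h3 -H mulr2n lerD.
move=> h; move: h X0 pi0; rewrite exprS.
move: (4 ^+ n.+1 : R) (pi ^+ 2 : R) => X P h X0 P0.
rewrite ler_pdivlMr ?ltr0n //.
rewrite -(ler_pM2l X0).
have -> : X * (O * 8) = ((4 * X / P) * O *+ 2) * P.
  by rewrite -mulr_natr; field; rewrite gt_eqF.
by rewrite ler_pM2r.
Qed.

End D3.


Section D4.
Variable R : realType.

Definition Zs (D : nat) : R := \sum_(1 <= d < D.+1) ((d%:R : R) ^+ 2)^-1.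
Definition Os (m : nat) : R := \sum_(0 <= k < m) (((k.*2.+1)%:R : R) ^+ 2)^-1.

Lemma Zs_mono m n : (m <= n)%N -> Zs m <= Zs n.
Proof.
move=> mn; rewrite /Zs (@big_cat_nat _ _ _ m.+1 1 n.+1) //= lerDl.
by apply: sumr_ge0 => i _; rewrite invr_ge0 exprn_ge0.
Qed.

Lemma Os_mono m n : (m <= n)%N -> Os m <= Os n.
Proof.
move=> mn; rewrite /Os (@big_cat_nat _ _ _ m 0 n) //= lerDl.
by apply: sumr_ge0 => i _; rewrite invr_ge0 exprn_ge0.
Qed.

Lemma Os_le m : Os m <= pi ^+ 2 / 8.
Proof.
apply: le_trans (odd_bound R m); apply: Os_mono.
by apply: ltnW; apply: ltn_expl.
Qed.

Lemma Zs_S n : Zs n.+1 = Zs n + ((n.+1%:R : R) ^+ 2)^-1.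
Proof. by rewrite /Zs big_nat_recr. Qed.

Lemma Os_S n : Os n.+1 = Os n + (((n.*2.+1)%:R : R) ^+ 2)^-1.
Proof. by rewrite /Os big_nat_recr. Qed.

Lemma Zs_split M : Zs M.*2 = Os M + Zs M / 4.
Proof.
elim: M => [|M IH]; first by rewrite /Zs /Os !big_geq // add0r mul0r.
rewrite doubleS (Zs_S M.*2.+1) (Zs_S M.*2) IH (Os_S M) (Zs_S M).
have -> : ((M.*2.+2)%:R : R) ^+ 2 = 4 * (M.+1)%:R ^+ 2.
  by rewrite -doubleS -mul2n natrM exprMn; congr (_ * _); rewrite expr2 -natrM.
rewrite [(4 * _)^-1]invfM; ring.
Qed.

Lemma Zs_le D : Zs D <= pi ^+ 2 / 6.
Proof.
have h1 := Zs_split D; have h3 := Os_le D.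
have h4 : Zs D <= Zs D.*2 by apply: Zs_mono; rewrite -addnn leq_addr.
lra.
Qed.

End D4.


Local Close Scope ring_scope.
Local Close Scope classical_set_scope.

Section A.
Variable a : nat -> nat.

Lemma size_Alist n : size (Alist a n) = n.
Proof. by elim: n => //= n IH; rewrite size_rcons IH. Qed.

Lemma Alist_inv n : forall p, p \in Alist a n -> p.2 = a p.1.+1.
Proof.
elim: n => //= n IH p; rewrite mem_rcons inE => /orP[/eqP ->|/IH //].
rewrite /nextA; case: eqP => //= _.
case E: [seq p <- Alist a n | inAP n p] => [|q s] //=.
have : q \in [seq p <- Alist a n | inAP n p] by rewrite E mem_head.
by rewrite mem_filter => /andP[_ /IH].
Qed.

Lemma Aset_eq n : Aset a n = nextA a (Alist a n) n.
Proof. by rewrite /Aset /= nth_rcons size_Alist ltnn eqxx. Qed.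

Lemma Aset_prop n : 0 < n ->
  (Aset a n).1 <= n /\ a (Aset a n).1.+1 %| n - (Aset a n).1.
Proof.
move=> n0; rewrite Aset_eq /nextA; case: eqP => [e|_]; first by rewrite e in n0.
case E: [seq p <- Alist a n | inAP n p] => [|q s] /=.
  by rewrite leqnn subnn dvdn0.
have : q \in [seq p <- Alist a n | inAP n p] by rewrite E mem_head.
rewrite mem_filter => /andP[/andP[h1 h2] /Alist_inv h3].
by rewrite h1 -h3.
Qed.

End A.


Definition sq (k : nat) : bool := moebius k != 0%R.

Lemma sq_def k : sq k = (0 < k) && squarefree k.
Proof.
rewrite /sq /moebius; case: k => [|k] //=.
case: (squarefree k.+1) => //=.
by rewrite expf_neq0 // oppr_eq0 oner_eq0.
Qed.

Lemma sqfP k : 0 < k ->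
  reflect (forall p, prime p -> ~~ (p * p %| k)) (squarefree k).
Proof.
move=> k0; apply: (iffP allP) => /= H.
  move=> p pp; apply/negP => hd.
  have pk : p \in primes k by rewrite mem_primes pp k0 (dvdn_trans (dvdn_mulr p (dvdnn p)) hd).
  have := H p pk; move: hd; rewrite mulnn pfactor_dvdn //.
  by move=> h /eqP e; rewrite e in h.
move=> p pk; have pp : prime p by move: pk; rewrite mem_primes => /andP[].
have h1 : 0 < logn p k by rewrite logn_gt0.
have h2 : logn p k <= 1.
  rewrite leqNgt; apply/negP => h; have := H p pp.
  by rewrite mulnn pfactor_dvdn // h.
by apply/eqP; lia.
Qed.

Lemma sqP k : reflect (0 < k /\ forall d, 1 < d -> ~~ (d * d %| k)) (sq k).
Proof.
rewrite sq_def; apply: (iffP andP) => -[k0 H]; split => //.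
  move=> d d1; apply/negP => hd.
  have pp := pdiv_prime d1; have := (elimT (sqfP _ k0) H) _ pp.
  move/negP; apply; apply: dvdn_trans _ hd; apply: dvdn_mul; exact: pdiv_dvd.
apply/sqfP => // p pp; apply: H; exact: prime_gt1.
Qed.

Lemma sq_logn {s} p : sq s -> logn p s <= 1.
Proof.
move=> /sqP[s0 H]; rewrite leqNgt; apply/negP => h.
have pp : prime p.
  have : 0 < logn p s by lia.
  by rewrite logn_gt0 mem_primes => /andP[].
have := H p (prime_gt1 pp); rewrite mulnn pfactor_dvdn //.
by rewrite h.
Qed.

Definition Pd (k d : nat) : bool := (d * d %| k) && sq (k %/ (d * d)).

Lemma Pd_pos {k d} : 0 < k -> Pd k d -> 0 < d.
Proof.
move=> k0 /andP[h _]; case: d h => // h.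
by rewrite muln0 dvd0n in h; move/eqP: h => h; rewrite h in k0.
Qed.

Lemma Pd_le {k d} : 0 < k -> Pd k d -> d <= k.
Proof.
move=> k0 hP; have d0 := Pd_pos k0 hP; move/andP: hP => [h _].
apply: leq_trans (dvdn_leq k0 h); exact: leq_pmulr.
Qed.

Lemma Pd_exists {k} : 0 < k -> exists d, Pd k d.
Proof.
move=> k0.
pose P := fun d => (0 < d) && (d * d %| k).
have exP : exists d, P d by exists 1; rewrite /P mul1n dvd1n.
have ubP : forall d, P d -> d <= k.
  move=> d /andP[d0 h]; apply: leq_trans (dvdn_leq k0 h); exact: leq_pmulr.
case: (ex_maxnP exP ubP) => d0 /andP[d00 hd0] hmax.
exists d0; rewrite /Pd hd0 /=; apply/sqP; split.
  by rewrite divn_gt0 ?muln_gt0 ?d00 // dvdn_leq.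
move=> e e1; apply/negP => he.
have : P (d0 * e).
  rewrite /P muln_gt0 d00 /= (ltn_trans _ e1) //=.
  rewrite -(divnK hd0) mulnACA mulnC.
  by apply: dvdn_mul.
move/hmax; rewrite leqNgt; move/negP; apply.
by rewrite ltn_Pmulr.
Qed.

Lemma Pd_uniq {k d1 d2} : 0 < k -> Pd k d1 -> Pd k d2 -> d1 = d2.
Proof.
move=> k0 h1 h2.
have d10 := Pd_pos k0 h1; have d20 := Pd_pos k0 h2.
move: h1 h2 => /andP[h1 s1] /andP[h2 s2].
have e1 := divnK h1; have e2 := divnK h2.
have s10 : 0 < k %/ (d1 * d1) by rewrite divn_gt0 ?muln_gt0 ?d10 // dvdn_leq.
have s20 : 0 < k %/ (d2 * d2) by rewrite divn_gt0 ?muln_gt0 ?d20 // dvdn_leq.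
apply: eqn_from_log => // p.
have l1 := sq_logn p s1; have l2 := sq_logn p s2.
have L1 : logn p k = logn p (k %/ (d1 * d1)) + (logn p d1 + logn p d1).
  by rewrite -{1}e1 lognM ?muln_gt0 ?d10 // lognM.
have L2 : logn p k = logn p (k %/ (d2 * d2)) + (logn p d2 + logn p d2).
  by rewrite -{1}e2 lognM ?muln_gt0 ?d20 // lognM.
lia.
Qed.

Definition Q (M : nat) : nat := \sum_(1 <= s < M.+1) sq s.

Lemma mult_sum m (g : nat -> nat) N : 0 < m ->
  \sum_(1 <= k < N.+1) (m %| k) * g (k %/ m) = \sum_(1 <= s < (N %/ m).+1) g s.
Proof.
move=> m0; elim: N => [|N IH]; first by rewrite div0n !big_geq.
rewrite big_nat_recr //= IH divnS //.
case: (boolP (m %| N.+1)) => h /=; last by rewrite mul0n addn0.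
by rewrite mul1n add1n [in RHS]big_nat_recr //=.
Qed.

Lemma sumPd k K : 0 < k -> k <= K -> \sum_(1 <= d < K.+1) Pd k d = 1.
Proof.
move=> k0 kK; have [d0 h0] := Pd_exists k0.
have d00 := Pd_pos k0 h0; have d0K := leq_trans (Pd_le k0 h0) kK.
rewrite (bigD1_seq d0) /=; last exact: iota_uniq.
  rewrite h0 big1 // => d hd; suff -> : Pd k d = false by []; apply/negP => hP.
  by move/eqP: hd; apply; apply: Pd_uniq hP h0.
by rewrite mem_iota d00 /=; lia.
Qed.

Lemma Q_ident N K : N <= K -> \sum_(1 <= d < K.+1) Q (N %/ (d * d)) = N.
Proof.
move=> NK.
have -> : \sum_(1 <= d < K.+1) Q (N %/ (d * d)) =
   \sum_(1 <= d < K.+1) \sum_(1 <= k < N.+1) Pd k d.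
  apply: eq_big_nat => d /andP[d0 _]; rewrite /Q -mult_sum ?muln_gt0 ?d0 //.
  by apply: eq_bigr => k _; rewrite /Pd -mulnb.
rewrite exchange_big_nat /=.
rewrite (eq_big_nat _ _ (F2 := fun _ => 1)); last first.
  move=> k /andP[k0 kN]; apply: sumPd => //; apply: leq_trans NK; by rewrite -ltnS.
by rewrite sum_nat_const_nat subn1 muln1.
Qed.


Local Open Scope ring_scope.

Lemma mu_cases n : moebius n = 0 \/ exists m, moebius n = (-1) ^+ m.
Proof.
rewrite /moebius; case: eqP => _; first by left.
case: squarefree; [right; eexists; reflexivity| by left].
Qed.

Lemma sign_ge (m : nat) : (-1 : int) <= (-1) ^+ m.
Proof. by rewrite -signr_odd; case: odd. Qed.

Lemma mu_prod_ge n m : -1 <= moebius n * moebius m.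
Proof.
case: (mu_cases n) => [->|[i ->]]; first by rewrite mul0r.
case: (mu_cases m) => [->|[j ->]]; first by rewrite mulr0.
by rewrite -exprD sign_ge.
Qed.

Lemma mu_sq n : moebius n * moebius n = (sq n)%:Z.
Proof.
rewrite /sq; case: (mu_cases n) => [->|[i ->]]; first by rewrite mulr0 eqxx.
rewrite -exprD addnn expf_neq0 ?oppr_eq0 ?oner_eq0 // -signr_odd odd_double.
by [].
Qed.

Section C.
Variable a : nat -> nat.

Lemma zmu_ge k : (0 < k)%N ->
  (sq k)%:Z - 2 * (((Aset a k).1 != k : nat))%:Z <= zfun a k * moebius k.
Proof.
move=> k0; rewrite /zfun; case: eqP => [->|_] /=.
  by rewrite mu_sq mulr0 subr0.
have := mu_prod_ge (Aset a k).1 k; case: (sq k) => /=; lia.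
Qed.

Lemma count_mult b r N : (0 < b)%N ->
  (\sum_(1 <= k < N.+1) ((r < k) && (b %| k - r)) = (N - r) %/ b)%N.
Proof.
move=> b0; elim: N => [|N IH]; first by rewrite big_geq // sub0n div0n.
rewrite big_nat_recr //= IH.
case: (leqP r N) => h.
  by rewrite ltnS h /= subSn // divnS // addnC.
have -> : (r < N.+1)%N = false by apply/negbTE; rewrite -leqNgt.
have -> : (N - r = 0)%N by lia.
have -> : (N.+1 - r = 0)%N by lia.
by rewrite addn0.
Qed.

Lemma cov_le k N : (0 < k)%N -> (k <= N)%N ->
  (((Aset a k).1 != k : nat) <= \sum_(0 <= r < N) ((r < k) && (a r.+1 %| k - r)))%N.
Proof.
move=> k0 kN; case: eqP => //= /eqP ne.
have [h1 h2] := Aset_prop a k k0.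
have rk : ((Aset a k).1 < k)%N by rewrite ltn_neqAle ne h1.
rewrite (bigD1_seq (Aset a k).1) /=; last exact: iota_uniq.
  by rewrite rk h2.
by rewrite mem_iota add0n; lia.
Qed.

End C.

Section C2.
Variable R : realType.
Variable a : nat -> nat.
Hypothesis apos : forall n, (0 < n)%N -> (0 < a n)%N.

Lemma cov_sum N :
  (\sum_(1 <= k < N.+1) ((Aset a k).1 != k : nat) <=
   \sum_(0 <= r < N) (N - r) %/ a r.+1)%N.
Proof.
apply: (@leq_trans (\sum_(1 <= k < N.+1) \sum_(0 <= r < N) ((r < k) && (a r.+1 %| k - r)))).
  rewrite big_nat_cond [X in (_ <= X)%N]big_nat_cond.
  apply: leq_sum => k /andP[/andP[k1 kN] _]; apply: cov_le => //.
rewrite exchange_big_nat /= leq_eqVlt; apply/orP; left; apply/eqP.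
apply: eq_bigr => r _; apply: count_mult; exact: apos.
Qed.

Lemma cov_sumR N :
  \sum_(1 <= k < N.+1) (((Aset a k).1 != k : nat)%:R : R) <=
   N%:R * \sum_(0 <= r < N) ((a r.+1)%:R)^-1.
Proof.
rewrite -natr_sum.
apply: (@le_trans _ _ (((\sum_(0 <= r < N) (N - r) %/ a r.+1)%N)%:R : R)).
  by rewrite ler_nat; exact: cov_sum.
rewrite natr_sum mulr_sumr; apply: ler_sum => r _.
have b0 : (0 : R) < (a r.+1)%:R by rewrite ltr0n apos.
rewrite ler_pdivlMr // -natrM ler_nat.
apply: leq_trans (leq_trunc_div _ _) _; exact: leq_subr.
Qed.

Lemma sum_lower N :
  (Q N)%:R - 2 * (N%:R * \sum_(0 <= r < N) ((a r.+1)%:R)^-1) <=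
  \sum_(1 <= k < N.+1) ((zfun a k * moebius k)%:~R : R).
Proof.
apply: le_trans (_ : (Q N)%:R - 2 * \sum_(1 <= k < N.+1) (((Aset a k).1 != k : nat)%:R : R) <= _).
  by rewrite lerD2l lerN2 ler_pM2l // cov_sumR.
rewrite /Q natr_sum mulr_sumr -sumrB.
apply: ler_sum_nat => k /andP[k1 _].
have := zmu_ge a k k1; rewrite -(ler_int R) => h; apply: le_trans h.
by rewrite rmorphB /= rmorphM /= !mulrz_nat.
Qed.

End C2.


Section E.
Variable R : realType.

Definition qq (M : nat) : R := (Q M)%:R.
Definition W (D : nat) : R := \sum_(2 <= d < D.+1) (((d%:R : R) ^+ 2)^-1).

Lemma Q_le M : (Q M <= M)%N.
Proof.
rewrite /Q; apply: leq_trans (_ : (\sum_(1 <= s < M.+1) 1 <= M)%N).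
  by apply: leq_sum => i _; case: sq.
by rewrite sum_nat_const_nat subn1 muln1.
Qed.

Lemma qq_ge0 M : 0 <= qq M.
Proof. by rewrite /qq ler0n. Qed.

Lemma qq_le M : qq M <= M%:R.
Proof. by rewrite /qq ler_nat Q_le. Qed.

Lemma Zs_W D : (0 < D)%N -> Zs R D = 1 + W D.
Proof.
by move=> D0; rewrite /Zs /W big_ltn // expr1n invr1.
Qed.

Lemma W_ge0 D : 0 <= W D.
Proof. by apply: sumr_ge0 => i _; rewrite invr_ge0 exprn_ge0. Qed.

Lemma fl_le m N : (0 < m)%N -> ((N %/ m)%:R : R) <= N%:R / m%:R.
Proof.
move=> m0; rewrite ler_pdivlMr ?ltr0n // -natrM ler_nat; exact: leq_trunc_div.
Qed.

Lemma fl_ge m N : (0 < m)%N -> N%:R / m%:R - 1 <= ((N %/ m)%:R : R).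
Proof.
move=> m0; rewrite lerBlDr ler_pdivrMr ?ltr0n // natr1 -natrM ler_nat.
by apply: ltnW; exact: ltn_ceil.
Qed.

Lemma aux_tel (y : R) : 0 < y -> ((y + 1) ^+ 2)^-1 <= y^-1 - (y + 1)^-1.
Proof.
move=> y0.
have y1 : y + 1 != 0 by rewrite gt_eqF // ltr_wpDr.
have e : y^-1 - (y + 1)^-1 - ((y + 1) ^+ 2)^-1 = (y * (y + 1) ^+ 2)^-1.
  by field; rewrite y1 gt_eqF.
have : 0 <= (y * (y + 1) ^+ 2)^-1.
  by rewrite invr_ge0 mulr_ge0 ?exprn_ge0 // ?addr_ge0 // ltW.
rewrite -e; lra.
Qed.

Lemma tail_le D j : (0 < D)%N ->
  \sum_(D.+1 <= d < (D + j).+1) (((d%:R : R) ^+ 2)^-1) <= (D%:R)^-1 - ((D + j)%:R)^-1.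
Proof.
move=> D0; elim: j => [|j IH]; first by rewrite addn0 big_geq // subrr.
rewrite addnS big_nat_recr /=; last by rewrite ltnS leq_addr.
set x : R := (D + j)%:R.
have x0 : 0 < x by rewrite /x ltr0n addn_gt0 D0.
have -> : ((D + j).+1%:R : R) = x + 1 by rewrite /x -natr1.
have := aux_tel x x0; lra.
Qed.


Lemma identR N D : (0 < D)%N ->
  N%:R = qq N + \sum_(2 <= d < D.+1) qq (N %/ (d * d)) +
         \sum_(D.+1 <= d < (N + D).+1) qq (N %/ (d * d)).
Proof.
move=> D0.
have h := Q_ident N (N + D) (leq_addr D N).
have -> : (N%:R : R) = \sum_(1 <= d < (N + D).+1) qq (N %/ (d * d)).
  by rewrite -{1}h natr_sum.
rewrite (@big_cat_nat _ _ _ 2) //= ?ltnS ?addn_gt0 ?D0 ?orbT //.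
rewrite big_nat1 muln1 divn1 -addrA; congr (_ + _).
rewrite (@big_cat_nat _ _ _ D.+1) //= ltnS ?leq_addl //.
Qed.

Lemma sum_inv_d N D : \sum_(2 <= d < D.+1) (N%:R / (d * d)%:R : R) = N%:R * W D.
Proof.
by rewrite /W mulr_sumr; apply: eq_bigr => d _; rewrite natrM -expr2.
Qed.

Lemma dirB (l B : R) D : 0 <= l -> (0 < D)%N ->
  (forall M, l * M%:R - B <= qq M) ->
  forall N, qq N <= (1 - l * W D) * N%:R + D%:R * (l + B).
Proof.
move=> l0 D0 H N.
have B0 : 0 <= B by have := H 0%N; rewrite /qq /Q big_geq //= mulr0; lra.
have E := identR N D D0.
have T0 : 0 <= \sum_(D.+1 <= d < (N + D).+1) qq (N %/ (d * d)).
  by apply: sumr_ge0 => d _; exact: qq_ge0.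
have M1 : \sum_(2 <= d < D.+1) (l * (N%:R / (d * d)%:R) - (l + B))
          <= \sum_(2 <= d < D.+1) qq (N %/ (d * d)).
  apply: ler_sum_nat => d /andP[d2 _].
  have dd : (0 < d * d)%N by rewrite muln_gt0; case: d d2.
  apply: le_trans (H _).
  have := fl_ge (d * d) N dd; have := ler_wpM2l l0 (fl_ge (d * d) N dd).
  lra.
have M2 : \sum_(2 <= d < D.+1) (l * (N%:R / (d * d)%:R) - (l + B)) =
          l * (N%:R * W D) - (l + B) * (D.-1)%:R.
  rewrite sumrB -mulr_sumr sum_inv_d sumr_const_nat.
  by rewrite mulr_natr subSS subn1.
have M3 : (l + B) * (D.-1)%:R <= D%:R * (l + B).
  rewrite mulrC ler_wpM2r ?addr_ge0 // ler_nat; exact: leq_pred.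
have -> : (1 - l * W D) * N%:R = N%:R - l * (N%:R * W D) by ring.
lra.
Qed.

Lemma dirA (u B : R) D : 0 <= u -> (0 < D)%N ->
  (forall M, qq M <= u * M%:R + B) ->
  forall N, (1 - u * W D - D%:R^-1) * N%:R - D%:R * B <= qq N.
Proof.
move=> u0 D0 H N.
have B0 : 0 <= B by have := H 0%N; rewrite /qq /Q big_geq //= mulr0; lra.
have E := identR N D D0.
have M1 : \sum_(2 <= d < D.+1) qq (N %/ (d * d)) <=
          \sum_(2 <= d < D.+1) (u * (N%:R / (d * d)%:R) + B).
  apply: ler_sum_nat => d /andP[d2 _].
  have dd : (0 < d * d)%N by rewrite muln_gt0; case: d d2.
  apply: le_trans (H _) _.
  have := ler_wpM2l u0 (fl_le (d * d) N dd); lra.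
have M2 : \sum_(2 <= d < D.+1) (u * (N%:R / (d * d)%:R) + B) =
          u * (N%:R * W D) + B * (D.-1)%:R.
  rewrite big_split /= -mulr_sumr sum_inv_d sumr_const_nat.
  by rewrite mulr_natr subSS subn1.
have M3 : B * (D.-1)%:R <= D%:R * B.
  rewrite mulrC ler_wpM2r // ler_nat; exact: leq_pred.
have T1 : \sum_(D.+1 <= d < (N + D).+1) qq (N %/ (d * d)) <=
          N%:R * \sum_(D.+1 <= d < (D + N).+1) (((d%:R : R) ^+ 2)^-1).
  rewrite addnC mulr_sumr; apply: ler_sum_nat => d /andP[d2 _].
  have dd : (0 < d * d)%N by rewrite muln_gt0; case: d d2.
  apply: le_trans (qq_le _) _; apply: le_trans (fl_le (d * d) N dd) _.
  by rewrite natrM -expr2.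
have T2 := tail_le D N D0.
have N0 : (0 : R) <= N%:R by rewrite ler0n.
have T3 : N%:R * \sum_(D.+1 <= d < (D + N).+1) (((d%:R : R) ^+ 2)^-1) <= N%:R * (D%:R)^-1.
  apply: ler_wpM2l => //; apply: le_trans T2 _.
  by rewrite lerBlDr lerDl invr_ge0 ler0n.
have W0 := W_ge0 D.
have -> : (1 - u * W D - D%:R^-1) * N%:R = N%:R - u * (N%:R * W D) - N%:R * D%:R^-1 by ring.
lra.
Qed.

End E.


Local Open Scope classical_set_scope.
Local Open Scope ring_scope.

Section F.
Variable R : realType.

Definition Low : set R :=
  [set l | 0 <= l <= 1 /\ exists B, forall M, l * M%:R - B <= qq R M].

Lemma Low0 : Low 0.
Proof. by split; [rewrite lexx ler01 | exists 0 => M; rewrite mul0r subr0 qq_ge0]. Qed.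

Lemma W_le D : (0 < D)%N -> W R D <= pi ^+ 2 / 6 - 1.
Proof. by move=> D0; have := Zs_le R D; rewrite (Zs_W R D D0); lra. Qed.

Lemma W_lt1 D : (0 < D)%N -> W R D < 1.
Proof. by move=> D0; have := W_le D D0; have := pi_sq_lt12 R; lra. Qed.

Lemma step l D : Low l -> (0 < D)%N ->
  exists2 l2, Low l2 & 1 - (1 - l * W R D) * W R D - D%:R^-1 <= l2.
Proof.
move=> [/andP[l0 l1] [B HB]] D0.
set c := W R D.
have c0 : 0 <= c := W_ge0 R D.
have c1 : c < 1 := W_lt1 D D0.
have u0 : 0 <= 1 - l * c.
  rewrite subr_ge0; have : l * c <= 1 * 1 by apply: ler_pM => //; lra.
  by rewrite mulr1.
have HU := @dirB R l B D l0 D0 HB.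
have HL := @dirA R _ _ D u0 D0 HU.
have Di : 0 <= (D%:R : R)^-1 by rewrite invr_ge0 ler0n.
have uc : 0 <= (1 - l * c) * c by apply: mulr_ge0.
case: (lerP 0 (1 - (1 - l * c) * c - D%:R^-1)) => h.
  exists (1 - (1 - l * c) * c - D%:R^-1) => //; split.
    by apply/andP; split => //; lra.
  by exists (D%:R * (D%:R * (l + B))).
by exists 0; [exact: Low0 | apply: ltW].
Qed.


Lemma Low_sup : has_sup Low.
Proof.
split; first by exists 0; exact: Low0.
by exists 1 => y [/andP[_ h] _].
Qed.

Lemma q_bound D : (1 < D)%N ->
  6 / pi ^+ 2 - D%:R^-1 / (1 - (pi ^+ 2 / 6 - 1) ^+ 2) <= sup Low.
Proof.
move=> D1; have D0 : (0 < D)%N by apply: ltnW.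
set q := sup Low; set c := W R D.
have c0 : 0 <= c := W_ge0 R D.
have c1 : c < 1 := W_lt1 D D0.
have cle : c <= pi ^+ 2 / 6 - 1 := W_le D D0.
have c14 : 1 / 4 <= c.
  rewrite /c /W big_ltn //= (_ : ((2%:R : R) ^+ 2)^-1 = 1 / 4); last first.
    by rewrite expr2; field.
  rewrite lerDl; apply: sumr_ge0 => i _; rewrite invr_ge0 exprn_ge0 //.
have pi2 := pi_sq_lt12 R.
have pi4 : 4 <= (pi : R) ^+ 2.
  have := pi_ge2 R => h; rewrite expr2; nra.
set X := 1 - c - D%:R^-1.
have hX : forall l, Low l -> X + c ^+ 2 * l <= q.
  move=> l Ll; have [l2 L2 h] := step l D Ll D0.
  apply: le_trans (sup_upper_bound Low_sup L2).
  apply: le_trans h; rewrite le_eqVlt; apply/orP; left; apply/eqP.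
  by rewrite /X /c; ring.
have cc0 : 0 < c ^+ 2 by rewrite exprn_gt0 //; lra.
have hq : q <= (q - X) / c ^+ 2.
  apply: ge_sup; first by exists 0; exact: Low0.
  move=> l Ll; rewrite ler_pdivlMr // mulrC; have := hX l Ll; lra.
have h1 : X <= q * (1 - c ^+ 2).
  move: hq; rewrite ler_pdivlMr // => hq; lra.
have t0 : 0 < 1 - c ^+ 2 by rewrite subr_gt0 expr2; nra.
have h2 : X / (1 - c ^+ 2) <= q by rewrite ler_pdivrMr.
apply: le_trans h2.
have -> : X / (1 - c ^+ 2) = 1 / (1 + c) - D%:R^-1 / (1 - c ^+ 2).
  have e1 : 1 + c != 0 by rewrite gt_eqF //; lra.
  have e2 : (D%:R : R) != 0 by rewrite pnatr_eq0 -lt0n.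
  by rewrite /X; field; rewrite e1 e2 gt_eqF.
have k0 : (0 : R) < 1 - (pi ^+ 2 / 6 - 1) ^+ 2.
  move: pi2 pi4; move: (pi ^+ 2 : R) => P p1 p2.
  have : (P / 6 - 1) ^+ 2 < 1 by rewrite expr2; nra.
  lra.
apply: lerD.
  rewrite ler_pdivlMr ?mul1r; last lra.
  rewrite -ler_pdivlMl; last by rewrite divr_gt0 //; lra.
  rewrite invf_div mulr1; lra.
rewrite lerN2 ler_pM2l ?invr_gt0 ?ltr0n //.
rewrite lef_pV2 ?posrE //.
rewrite lerD2l lerN2 !expr2; nra.
Qed.

End F.


Lemma q_ge (R : realType) : 6 / pi ^+ 2 <= sup (Low R).
Proof.
apply/ler_addgt0Pr => e e0.
set k := 1 - (pi ^+ 2 / 6 - 1) ^+ 2 : R.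
have k0 : 0 < k.
  have pi2 := pi_sq_lt12 R.
  have pi4 : 4 <= (pi : R) ^+ 2 by have := pi_ge2 R => h; rewrite expr2; nra.
  rewrite /k; move: pi2 pi4; move: (pi ^+ 2 : R) => P p1 p2.
  have : (P / 6 - 1) ^+ 2 < 1 by rewrite expr2; nra.
  lra.
set x := (k * e)^-1.
have x0 : 0 <= x by rewrite /x invr_ge0 ltW // mulr_gt0.
set D := (Num.Def.archi_bound x).+2.
have hD := archi_boundP x0.
have hD' : x <= D%:R.
  apply: ltW; apply: lt_le_trans hD _; rewrite ler_nat /D; lia.
have h := @q_bound R D isT; rewrite -/k in h.
apply: le_trans (_ : sup (Low R) + D%:R^-1 / k <= _); first by lra.
rewrite lerD2l.
have D0 : (0 : R) < D%:R by rewrite ltr0n.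
have xp : 0 < x by rewrite /x invr_gt0 mulr_gt0.
have h2 : D%:R^-1 <= x^-1 by rewrite lef_pV2 ?posrE.
rewrite /x invrK in h2.
by rewrite ler_pdivrMr // mulrC.
Qed.

Theorem proposition6p2 (R : realType) (a : nat -> nat) (rho : R)
  (apos : forall n, (0 < n)%N -> (0 < a n)%N)
  (aincr : forall n, (0 < n)%N -> (a n < a n.+1)%N)
  (adiv : forall n, (0 < n)%N -> (a n %| a n.+1)%N)
  (hrho : series (fun n : nat => ((a n.+1)%:R : R)^-1) @ \oo --> rho)
  (hrho4 : rho <= 1 / 4) :
  ((6 / pi ^+ 2 - 2 * rho)%:E <=
     limn_einf (fun N : nat =>
       ((N%:R)^-1 * \sum_(1 <= k < N.+1)
          ((zfun a k * moebius k)%:~R : R))%:E))%E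
  /\ 0 < 6 / pi ^+ 2 - 2 * rho.
Proof.
have pi2 := pi_sq_lt12 R.
have pi4 : 4 <= (pi : R) ^+ 2 by have := pi_ge2 R => h; rewrite expr2; nra.
have c_half : 1 / 2 < 6 / (pi : R) ^+ 2.
  rewrite ltr_pdivlMr ?exprn_gt0 ?pi_gt0 //; lra.
split; last by lra.
have rhoN : forall N, \sum_(0 <= r < N) ((a r.+1)%:R : R)^-1 <= rho.
  move=> N.
  have nd : nondecreasing_seq (series (fun n => ((a n.+1)%:R : R)^-1)).
    have := @nondecreasing_series R (fun n => ((a n.+1)%:R : R)^-1) predT 0%N.
    by apply => n _ _; rewrite invr_ge0 ler0n.
  have cv : cvgn (series (fun n => ((a n.+1)%:R : R)^-1)).
    by apply/cvg_ex; exists rho.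
  have := nondecreasing_cvgn_le nd cv N.
  by rewrite (cvg_lim (@Rhausdorff R) hrho).
have e2 : forall e : R, 0 < e -> 0 < e / 2 by move=> e e0; rewrite divr_gt0.
apply/lee_subgt0Pr => e e0.
have [l [/andP[l0 l1] [B HB]] hl] := sup_adherent (e2 e e0) (Low_sup R).
have hq := q_ge R.
have B0 : 0 <= B by have := HB 0%N; rewrite /qq /Q big_geq //= mulr0; lra.
set N0 := (Num.Def.archi_bound (2 * B / e)).+1.
have hN0 := archi_boundP (_ : 0 <= 2 * B / e).
rewrite limn_einf_lim; apply: lime_ge; first exact: is_cvg_einfs.
near=> n.
have nN : (N0 <= n)%N by near: n; apply: nbhs_infty_ge.
apply: le_ereal_inf_tmp => _ [k /= nk <-].
have kN : (N0 <= k)%N by apply: leq_trans nN nk.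
have k0 : (0 < k)%N by apply: leq_trans kN.
have kR : (0 : R) < k%:R by rewrite ltr0n.
rewrite -EFinB lee_fin.
have h1 := sum_lower R a apos k.
have h2 := HB k.
have h3 := rhoN k.
have hB : B / k%:R <= e / 2.
  rewrite ler_pdivrMr //.
  have : 2 * B / e < k%:R.
    apply: lt_le_trans (hN0 _) _; first by rewrite divr_ge0 ?mulr_ge0 // ltW.
    by rewrite ler_nat; apply: leq_trans kN; rewrite /N0.
  rewrite ltr_pdivrMr // => h; lra.
set S := \sum_(1 <= i < k.+1) _ in h1 *.
have h4 : l * k%:R - B - 2 * (k%:R * rho) <= S.
  apply: le_trans h1; have : k%:R * \sum_(0 <= r < k) ((a r.+1)%:R : R)^-1 <= k%:R * rho.
    by rewrite ler_pM2l.
  rewrite /qq in h2; lra.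
have h5 : (k%:R)^-1 * (l * k%:R - B - 2 * (k%:R * rho)) <= (k%:R)^-1 * S.
  by rewrite ler_pM2l ?invr_gt0.
have E : (k%:R)^-1 * (l * k%:R - B - 2 * (k%:R * rho)) = l - B / k%:R - 2 * rho.
  by field; rewrite gt_eqF.
rewrite E in h5.
lra.
Unshelve. all: by end_near.
Qed.
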